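(* Let $({\cal A},* )$ be a real quantum group (a $*$-Hopf algebra with coproduct $\Delta$, antipode $S$), let $\tau=*\circ S$, and let $g:{\cal A}\rightarrow{\bf C}$ be a character, i.e. a $*$-homomorphism of ${\cal A}$ into ${\bf C}$. Define ${\rm Ad}_g\,x=\sum_{(x)}g(S(x_{(1)}))\,g(x_{(3)})\,x_{(2)}$ for $x\in{\cal A}$. Let $r:{\cal A}\rightarrow{\cal K}$ be the projection that defines a right coisotropic quantum subgroup ${\cal K}$ of ${\cal A}$, and let $r_g[x]=r[{\rm Ad}_g^{-1}\,x]$, $x\in{\cal A}$. Then ${\rm Ker}\,r_g={\rm Ad}_g\,{\rm Ker}\,r$ is a $\tau$-invariant right ideal and two-sided coideal of ${\cal A}$, and it determines a right coisotropic quantum subgroup ${\cal K}_g$. The corresponding homogeneous space $B^{r_g}=\{a\in{\cal A}\,|\,({\rm id}\otimes r_g)\Delta a=a\otimes r_g(1)\}$ equals ${\rm Ad}_g\,B^r$, where $B^r=\{a\in{\cal A}\,|\,({\rm id}\otimes r)\Delta a=a\otimes r(1)\}$, and $B^{r_g}$ is isomorphic to $B^r$ as a left comodule algebra.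
   Context: A real coisotropic quantum right subgroup $({\cal K},\tau_{\cal K})$ of a real quantum group $({\cal A},* )$ is a coalgebra and right ${\cal A}$-module ${\cal K}$ such that (i) there is a surjective linear map $r:{\cal A}\rightarrow{\cal K}$ which is a morphism of coalgebras and of right ${\cal A}$-modules (with ${\cal A}$ a module over itself via multiplication), and (ii) there is an antilinear map $\tau_{\cal K}:{\cal K}\rightarrow{\cal K}$ with $\tau_{\cal K}\circ r=r\circ\tau$, where $\tau=*\circ S$. Such subgroups correspond bijectively to $\tau$-invariant two-sided coideals that are right ideals in ${\cal A}$ (via ${\cal K}={\cal A}/{\rm Ker}\,r$). *)

(* Defs.v *)
From mathcomp Require Import all_boot all_algebra.
From mathcomp Require Import reals complex.
Set Implicit Arguments.
Unset Strict Implicit.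
Unset Printing Implicit Defensive.
Import GRing.Theory Num.Theory.
Local Open Scope ring_scope.

Section Defs.
Variable R : realType.
Local Notation C := (R[i]).

(* Algebraic tensors.  An element of V (x) W is represented by a finite *)
(* list of simple tensors  sum_i v_i (x) w_i.  Two representations are  *)
(* equal in V (x) W iff they agree under all pure functionals f (x) h   *)
(* (pure functionals separate the points of an algebraic tensor product *)
(* of vector spaces).                                                   *)
Definition teq2 (V W : lmodType C) (s t : seq (V * W)) : Prop :=
  forall (f : {scalar V}) (h : {scalar W}),
    \sum_(p <- s) f p.1 * h p.2 = \sum_(p <- t) f p.1 * h p.2.

Definition teq3 (U V W : lmodType C) (s t : seq (U * V * W)) : Prop :=
  forall (e : {scalar U}) (f : {scalar V}) (h : {scalar W}),
    \sum_(p <- s) e p.1.1 * f p.1.2 * h p.2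
    = \sum_(p <- t) e p.1.1 * f p.1.2 * h p.2.

(* Real quantum group = *-Hopf algebra over C.  The coproduct is given *)
(* in Sweedler form: cop x = [:: (x_(1), x_(2)); ...] (a representative *)
(* of Delta x in A (x) A).                                              *)
Record hopf_ops (A : algType C) := HopfOps {
  cop  : A -> seq (A * A);
  cou  : A -> C;
  ant  : A -> A;
  star : A -> A
}.

Section Hopf.
Variables (A : algType C) (H : hopf_ops A).

Definition scale_left (a : C) (s : seq (A * A)) :=
  [seq (a *: p.1, p.2) | p <- s].

Definition is_star_hopf : Prop :=
  [/\ [/\
      (forall (a : C) (x y : A),
         teq2 (cop H (a *: x + y)) (scale_left a (cop H x) ++ cop H y)),
      (forall x y : A,
         teq2 (cop H (x * y))
              [seq (p.1 * q.1, p.2 * q.2) | p <- cop H x, q <- cop H y]),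
      teq2 (cop H 1) [:: (1, 1)] &
      (forall x : A,
         teq3 [seq (q.1, q.2, p.2) | p <- cop H x, q <- cop H p.1]
              [seq (p.1, q.1, q.2) | p <- cop H x, q <- cop H p.2])],
      [/\ forall (a : C) (x y : A), cou H (a *: x + y) = a * cou H x + cou H y,
          forall x y : A, cou H (x * y) = cou H x * cou H y,
          cou H 1 = 1,
          forall x : A, \sum_(p <- cop H x) cou H p.1 *: p.2 = x &
          forall x : A, \sum_(p <- cop H x) cou H p.2 *: p.1 = x],
      [/\ forall (a : C) (x y : A), ant H (a *: x + y) = a *: ant H x + ant H y,
          forall x : A, \sum_(p <- cop H x) ant H p.1 * p.2 = cou H x *: 1 &
          forall x : A, \sum_(p <- cop H x) p.1 * ant H p.2 = cou H x *: 1] &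
      [/\ forall (a : C) (x y : A),
            star H (a *: x + y) = a^* *: star H x + star H y,
          forall x : A, star H (star H x) = x,
          forall x y : A, star H (x * y) = star H y * star H x &
          forall x : A,
            teq2 (cop H (star H x)) [seq (star H p.1, star H p.2) | p <- cop H x]]].

Definition tau (x : A) : A := star H (ant H x).

Definition is_character (g : A -> C) : Prop :=
  [/\ forall (a : C) (x y : A), g (a *: x + y) = a * g x + g y,
      forall x y : A, g (x * y) = g x * g y,
      g 1 = 1 &
      forall x : A, g (star H x) = (g x)^*].

Definition Ad (g : A -> C) (x : A) : A :=
  \sum_(p <- cop H x) \sum_(q <- cop H p.2) (g (ant H p.1) * g q.2) *: q.1.

Record cqs_ops (K : lmodType C) := CqsOps {
  kcop : K -> seq (K * K);
  kcou : K -> C;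
  kact : K -> A -> K;
  ktau : K -> K
}.

Definition is_rcqs (K : lmodType C) (O : cqs_ops K) (r : A -> K) : Prop :=
  [/\
      [/\ forall (a : C) (k l : K),
            teq2 (kcop O (a *: k + l))
                 ([seq (a *: p.1, p.2) | p <- kcop O k] ++ kcop O l),
          forall (a : C) (k l : K), kcou O (a *: k + l) = a * kcou O k + kcou O l,
          forall k : K,
            teq3 [seq (q.1, q.2, p.2) | p <- kcop O k, q <- kcop O p.1]
                 [seq (p.1, q.1, q.2) | p <- kcop O k, q <- kcop O p.2],
          forall k : K, \sum_(p <- kcop O k) kcou O p.1 *: p.2 = k &
          forall k : K, \sum_(p <- kcop O k) kcou O p.2 *: p.1 = k],
      [/\ forall (a : C) (k l : K) (x : A),
            kact O (a *: k + l) x = a *: kact O k x + kact O l x,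
          forall (a : C) (k : K) (x y : A),
            kact O k (a *: x + y) = a *: kact O k x + kact O k y,
          forall k : K, kact O k 1 = k &
          forall (k : K) (x y : A), kact O (kact O k x) y = kact O k (x * y)],
      [/\
      (forall (a : C) (x y : A), r (a *: x + y) = a *: r x + r y),
      (forall k : K, exists x : A, r x = k),
      (forall x : A, teq2 (kcop O (r x)) [seq (r p.1, r p.2) | p <- cop H x]
                     /\ kcou O (r x) = cou H x) &
      (forall x y : A, r (x * y) = kact O (r x) y)] &
      (forall (a : C) (k l : K), ktau O (a *: k + l) = a^* *: ktau O k + ktau O l)
      /\ (forall x : A, ktau O (r x) = r (tau x))].

Definition is_tau_rideal_coideal (I : A -> Prop) : Prop :=
  [/\ I 0,
      (forall (a : C) (x y : A), I x -> I y -> I (a *: x + y)),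
      (forall x y : A, I x -> I (x * y)),
      (forall x : A, I x -> I (tau x)) &
      (* Delta I <= I (x) A + A (x) I  and  epsilon I = 0 *)
      (forall x : A, I x ->
         cou H x = 0 /\
         exists s : seq (A * A), teq2 s (cop H x) /\
           forall p, p \in s -> I p.1 \/ I p.2)].

Definition homsp (K : lmodType C) (r : A -> K) (a : A) : Prop :=
  teq2 [seq (p.1, r p.2) | p <- cop H a] [:: (a, r 1)].

Definition lcomod_alg_iso (B1 B2 : A -> Prop) : Prop :=
  exists phi : A -> A,
    [/\ (forall a, B1 a -> B2 (phi a)),
        (forall a b, B1 a -> B1 b -> phi a = phi b -> a = b)
        /\ (forall b, B2 b -> exists a, B1 a /\ phi a = b),
        (forall (k : C) a b, B1 a -> B1 b -> phi (k *: a + b) = k *: phi a + phi b),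
        (phi 1 = 1 /\
         forall a b, B1 a -> B1 b -> phi (a * b) = phi a * phi b) &
        (forall a, B1 a ->
           exists s : seq (A * A),
             [/\ teq2 s (cop H a),
                 (forall p, p \in s -> B1 p.2) &
                 teq2 (cop H (phi a)) [seq (p.1, phi p.2) | p <- s]])].

End Hopf.
End Defs.

(* Main.v *)
Require Import Defs.
From HB Require Import structures.
From mathcomp Require Import all_boot all_algebra.
From mathcomp Require Import reals complex.
From mathcomp Require Import boolp classical_sets.
From mathcomp Require Import ring.
Import GRing.Theory Num.Theory.
Local Open Scope ring_scope.
Set Implicit Arguments. Unset Strict Implicit. Unset Printing Implicit Defensive.

Section LA.
Variable R : realType.
Local Notation C := (R[i]).

Definition mksc (V : lmodType C) (f : V -> C) (Hf : scalar f) : {scalar V} :=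
  HB.pack f (GRing.isLinear.Build _ _ _ _ f Hf).
Definition mkln (V W : lmodType C) (f : V -> W) (Hf : linear f) : {linear V -> W} :=
  HB.pack f (GRing.isLinear.Build _ _ _ _ f Hf).

Lemma mkscE (V : lmodType C) (f : V -> C) (Hf : scalar f) x : mksc Hf x = f x.
Proof. by []. Qed.

Variable V : lmodType C.

Definition subsp (U : V -> Prop) :=
  U 0 /\ forall c x y, U x -> U y -> U (c *: x + y).

Lemma proj_ex (U : V -> Prop) : subsp U ->
  exists P : V -> V, [/\ linear P, (forall x, U (P x)) & (forall x, U x -> P x = x)].
Proof.
move=> [U0 Ucl].
pose good (X : set V) := [/\ X 0, (forall c x y, X x -> X y -> X (c *: x + y)) &
   (forall x, X x -> U x -> x = 0)].
pose PS (X : set V) := X = set0 \/ good X.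
have [A [PA Amax]] : exists A, PS A /\ forall B, (A `<` B)%classic -> ~ PS B.
  apply: Zorn_bigcup => F FP Ftot.
  case: (pselect (exists X, F X /\ X 0)) => [[X0 [FX0 X00]]|Nex].
    right; split.
    - by exists X0.
    - move=> c x y [X1 FX1 X1x] [X2 FX2 X2y].
      have gX1 : good X1.
        by case: (FP _ FX1) => // E; rewrite E in X1x.
      have gX2 : good X2.
        by case: (FP _ FX2) => // E; rewrite E in X2y.
      case: (Ftot _ _ FX1 FX2) => sub.
      + exists X2 => //; case: gX2 => _ cl _; apply: cl => //; exact: sub.
      + exists X1 => //; case: gX1 => _ cl _; apply: cl => //; exact: sub.
    - move=> x [X FX Xx] Ux.
      case: (FP _ FX) => [E|[_ _ d]]; first by rewrite E in Xx.
      exact: d.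
  left; apply/seteqP; split => // x [X FX Xx].
  case: (FP _ FX) => [E|[X0 _ _]]; first by rewrite E in Xx.
  by exfalso; apply: Nex; exists X.
have gA : good A.
  case: PA => // A0; exfalso; apply: (Amax (fun y : V => y = 0)).
  - rewrite A0; split => // /(_ 0 erefl) //.
  - right; split.
    + by [].
    + by move=> c x y -> ->; rewrite scaler0 addr0.
    + by move=> x ->.
case: gA => A0 Acl AU.
have dec : forall x, exists u, exists w, [/\ A w, U u & x = w + u].
  move=> x; case: (pselect (exists u w, [/\ A w, U u & x = w + u])) => // Nd; exfalso.
  pose B : set V := fun y => exists c w, A w /\ y = w + c *: x.
  apply: (Amax B).
    rewrite /proper; split.
      by move=> w Aw; exists 0, w; rewrite scale0r addr0.
    move=> sub; have Ax : A x.
      by apply: sub; exists 1, 0; split => //; rewrite scale1r add0r.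
    by apply: Nd; exists 0, x; split => //; rewrite addr0.
  right; split.
  - by exists 0, 0; rewrite scale0r addr0.
  - move=> c y z [c1 [w1 [Aw1 ->]]] [c2 [w2 [Aw2 ->]]].
    exists (c * c1 + c2), (c *: w1 + w2); split; first exact: Acl.
    by rewrite scalerDr scalerDl scalerA; rewrite !addrA; congr (_ + _);
      rewrite -!addrA; congr (_ + _); rewrite addrC.
  - move=> y [c [w [Aw ->]]] Uy.
    case: (eqVneq c 0) => [c0|cn0].
      by move: Uy; rewrite c0 scale0r !addr0 => Uw; apply: AU.
    exfalso; apply: Nd; exists (c^-1 *: (w + c *: x)), (- (c^-1 *: w)); split.
    + have -> : - (c^-1 *: w) = (- c^-1) *: w + 0 by rewrite addr0 scaleNr.
        by apply: Acl.
    + by rewrite -[X in U X]addr0; apply: Ucl.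
    + by rewrite scalerDr scalerA mulVf // scale1r addrA addNr add0r.
have uniq : forall w u w' u', A w -> U u -> A w' -> U u' -> w + u = w' + u' -> u = u'.
  move=> w u w' u' Aw Uu Aw' Uu' E.
  have d : w - w' = u' - u.
    have -> : u' = w + u - w' by rewrite E addrC addKr.
    by rewrite addrAC addrK.
  have Ad : A (w - w') by rewrite -scaleN1r addrC; apply: Acl.
  have Ud : U (u' - u) by rewrite -scaleN1r addrC; apply: Ucl.
  rewrite -d in Ud; have := AU _ Ad Ud; rewrite d => /eqP; rewrite subr_eq0 => /eqP.
  by move=> ->.
pose P x := projT1 (cid (dec x)).
have PP x : exists w, [/\ A w, U (P x) & x = w + P x] := projT2 (cid (dec x)).
exists P; split.
- move=> c x y; case: (PP x) => wx [Awx Ux Ex]; case: (PP y) => wy [Awy Uy Ey].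
  case: (PP (c *: x + y)) => w [Aw Uw Ew].
  apply: (uniq w _ (c *: wx + wy)) => //; first by apply: Acl.
  - by apply: Ucl.
  - rewrite -Ew {1}Ex {1}Ey scalerDr.
    by rewrite !addrA; congr (_ + _); rewrite -!addrA; congr (_ + _); rewrite addrC.
- by move=> x; case: (PP x) => w [].
- move=> x Ux; case: (PP x) => w [Aw UPx E].
  by symmetry; apply: (uniq 0 _ w) => //; rewrite add0r.
Qed.


Lemma sc_lin (f : V -> C) (Hf : scalar f) k x y : f (k *: x + y) = k * f x + f y.
Proof. exact: Hf. Qed.
Lemma sc0 (f : V -> C) (Hf : scalar f) : f 0 = 0.
Proof. by rewrite -(mkscE Hf) linear0. Qed.
Lemma scZ (f : V -> C) (Hf : scalar f) k x : f (k *: x) = k * f x.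
Proof. by rewrite -[k *: x]addr0 Hf sc0 // addr0. Qed.
Lemma scD (f : V -> C) (Hf : scalar f) x y : f (x + y) = f x + f y.
Proof. by rewrite -[x]scale1r Hf mul1r scale1r. Qed.
Lemma scN (f : V -> C) (Hf : scalar f) x : f (- x) = - f x.
Proof. by rewrite -(mkscE Hf) linearN. Qed.
Lemma sc_sum (f : V -> C) (Hf : scalar f) I (r : seq I) (P : pred I) (F : I -> V) :
  f (\sum_(i <- r | P i) F i) = \sum_(i <- r | P i) f (F i).
Proof. by rewrite -(mkscE Hf) linear_sum. Qed.

Lemma ln0 (W : lmodType C) (f : V -> W) (Hf : linear f) : f 0 = 0.
Proof. by rewrite -[f]/(mkln Hf : V -> W) linear0. Qed.
Lemma lnZ (W : lmodType C) (f : V -> W) (Hf : linear f) k x : f (k *: x) = k *: f x.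
Proof. by rewrite -[f]/(mkln Hf : V -> W) linearZ. Qed.
Lemma lnD (W : lmodType C) (f : V -> W) (Hf : linear f) x y : f (x + y) = f x + f y.
Proof. by rewrite -[f]/(mkln Hf : V -> W) linearD. Qed.
Lemma lnN (W : lmodType C) (f : V -> W) (Hf : linear f) x : f (- x) = - f x.
Proof. by rewrite -[f]/(mkln Hf : V -> W) linearN. Qed.
Lemma ln_sum (W : lmodType C) (f : V -> W) (Hf : linear f) I (r : seq I) (P : pred I) (F : I -> V) :
  f (\sum_(i <- r | P i) F i) = \sum_(i <- r | P i) f (F i).
Proof. by rewrite -[f]/(mkln Hf : V -> W) linear_sum. Qed.

Lemma fun_ex (w : V) : w != 0 -> exists F : V -> C, scalar F /\ F w = 1.
Proof.
move=> wn0.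
have sU : subsp (fun y => exists c, y = c *: w).
  split; first by exists 0; rewrite scale0r.
  move=> k x y [c1 ->] [c2 ->]; exists (k * c1 + c2); by rewrite scalerDl scalerA.
have [P [Plin PU Pid]] := proj_ex sU.
pose c x := projT1 (cid (PU x)).
have cE x : P x = c x *: w := projT2 (cid (PU x)).
have inj a b : a *: w = b *: w -> a = b.
  move=> /eqP; rewrite -subr_eq0 -scalerBl scaler_eq0 (negbTE wn0) orbF subr_eq0.
  by move/eqP.
exists c; split.
  move=> k x y; apply: inj; rewrite -cE Plin !cE scalerDl scalerA //.
apply: inj; rewrite -cE scale1r; apply: Pid; exists 1; by rewrite scale1r.
Qed.

Lemma sep_fun (n : nat) (a : 'I_n -> V) (v : V) :
  ~ (exists c : 'I_n -> C, v = \sum_i c i *: a i) ->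
  exists F : V -> C, [/\ scalar F, F v = 1 & forall i, F (a i) = 0].
Proof.
move=> Nv.
have sU : subsp (fun y => exists c : 'I_n -> C, y = \sum_i c i *: a i).
  split.
    by exists (fun _ => 0); rewrite big1 // => i _; rewrite scale0r.
  move=> k x y [c1 ->] [c2 ->]; exists (fun i => k * c1 i + c2 i).
  by rewrite scaler_sumr -big_split; apply: eq_bigr => i _; rewrite scalerDl scalerA.
have [P [Plin PU Pid]] := proj_ex sU.
have wn0 : v - P v != 0.
  apply/negP; rewrite subr_eq0 => /eqP E; apply: Nv; rewrite E; exact: PU.
have [G [HG Gw]] := fun_ex wn0.
exists (fun x => G (x - P x)); split => //.
- move=> k x y /=.
  rewrite Plin -(sc_lin HG); congr G.
  by rewrite scalerBr opprD !addrA; congr (_ + _); rewrite addrAC.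
- move=> i; rewrite Pid ?subrr ?sc0 //.
  exists (fun j => if j == i then 1 else 0).
  rewrite (bigD1 i) //= eqxx scale1r big1 ?addr0 // => j /negbTE ->.
  by rewrite scale0r.
Qed.

Lemma key (N : lmodType C) n (a : 'I_n -> V) (m : 'I_n -> V -> N) :
  (forall i, linear (m i)) ->
  (forall f : V -> C, scalar f -> forall u, \sum_i f (a i) *: m i u = 0) ->
  \sum_i m i (a i) = 0.
Proof.
elim: n a m => [|n IH] a m Hm Hyp; first by rewrite big_ord0.
rewrite big_ord_recl.
pose a' i := a (lift ord0 i).
pose m' i := m (lift ord0 i).
have Hyp' f (Hf : scalar f) u : f (a ord0) *: m ord0 u + \sum_i f (a' i) *: m' i u = 0.
  by have := Hyp f Hf u; rewrite big_ord_recl.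
case: (pselect (exists c : 'I_n -> C, a ord0 = \sum_i c i *: a' i)) => [[c Ec]|Nex].
  pose m'' i u := m' i u + c i *: m ord0 u.
  have Hm'' i : linear (m'' i).
    move=> k x y; rewrite /m'' /m' (Hm (lift ord0 i)) (Hm ord0) scalerDr scalerA.
    rewrite scalerDr scalerA [c i * k]mulrC !addrA; congr (_ + _).
    by rewrite -!addrA; congr (_ + _); rewrite addrC.
  have Hyp'' : forall f : V -> C, scalar f ->
      forall u, \sum_i f (a' i) *: m'' i u = 0.
    move=> f Hf u.
    transitivity (f (a ord0) *: m ord0 u + \sum_i f (a' i) *: m' i u); last exact: Hyp' f Hf u.
    rewrite Ec (sc_sum Hf) /m''.
    under eq_bigr do rewrite scalerDr scalerA.
    rewrite big_split /= addrC; congr (_ + _).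
    rewrite scaler_suml; apply: eq_bigr => i _; by rewrite (scZ Hf) mulrC.
  have := IH a' m'' Hm'' Hyp''.
  rewrite /m'' big_split /=.
  rewrite [X in _ + X = 0](eq_bigr (fun i => m ord0 (c i *: a' i))); last first.
    by move=> i _; rewrite (lnZ (Hm ord0)).
  rewrite -(ln_sum (Hm ord0)) -Ec addrC => E.
  exact: E.
have [F [HF Fa0 Fa']] := sep_fun Nex.
have m00 u : m ord0 u = 0.
  have E : \sum_i F (a' i) *: m' i u = 0.
    by apply: big1 => i _; rewrite Fa' scale0r.
  by have := Hyp' F HF u; rewrite Fa0 scale1r E addr0.
rewrite m00 add0r; apply: (IH a' m') => [i|f Hf u]; first exact: Hm.
pose f'' x := f x - f (a ord0) * F x.
have Hf'' : scalar f''.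
  move=> k x y; rewrite /f'' (sc_lin Hf) (sc_lin HF).
  by rewrite mulrDr opprD mulrCA !addrA mulrBr; congr (_ - _); rewrite addrAC.
have := Hyp' f'' Hf'' u.
rewrite /f'' Fa0 mulr1 subrr scale0r add0r.
by under eq_bigr do rewrite Fa' mulr0 subr0.
Qed.

Lemma key_seq (N : lmodType C) (T : Type) (l : seq T) (a : T -> V) (m : T -> V -> N) :
  (forall t, linear (m t)) ->
  (forall f : V -> C, scalar f -> forall u, \sum_(t <- l) f (a t) *: m t u = 0) ->
  \sum_(t <- l) m t (a t) = 0.
Proof.
case: l => [|t0 l] Hm Hyp; first by rewrite big_nil.
set l0 := t0 :: l.
rewrite (big_nth t0) big_mkord.
apply: (key (a := fun i : 'I_(size l0) => a (nth t0 l0 i))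
            (m := fun i => m (nth t0 l0 i))) => // f Hf u.
by have := Hyp f Hf u; rewrite (big_nth t0) big_mkord.
Qed.

End LA.

Section TEQ.
Variable R : realType.
Local Notation C := (R[i]).

Let sg (b : bool) : C := if b then 1 else -1.

Let sgE (T : Type) (N : zmodType) (s t : seq T) (F : T -> N) :
  \sum_(q <- [seq (p, true) | p <- s] ++ [seq (p, false) | p <- t]) (if q.2 then F q.1 else - F q.1)
  = \sum_(p <- s) F p - \sum_(p <- t) F p.
Proof. by rewrite big_cat !big_map /= sumrN. Qed.

Lemma teq2_bil (V W N : lmodType C) (s t : seq (V * W)) (b : V -> W -> N) :
  (forall w, linear (b^~ w)) -> (forall v, linear (b v)) -> teq2 s t ->
  \sum_(p <- s) b p.1 p.2 = \sum_(p <- t) b p.1 p.2.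
Proof.
move=> Hl Hr Ht; apply/eqP; rewrite -subr_eq0; apply/eqP.
set l := [seq (p, true) | p <- s] ++ [seq (p, false) | p <- t].
rewrite -(sgE s t (fun p => b p.1 p.2)).
rewrite (eq_bigr (fun q => (fun q u => sg q.2 *: b u q.1.2) q q.1.1)); last first.
  by move=> [p []] _ /=; rewrite ?scale1r ?scaleN1r.
apply: (key_seq (l := l) (a := fun q => q.1.1) (m := fun q u => sg q.2 *: b u q.1.2)).
  move=> q k x y /=; rewrite Hl scalerDr !scalerA mulrC //.
move=> f Hf u.
apply: (key_seq (l := l) (a := fun q => q.1.2) (m := fun q w => f q.1.1 *: (sg q.2 *: b u w))).
  move=> q k x y /=; rewrite Hr !scalerDr !scalerA; congr (_ *: _ + _); ring.
move=> h Hh w.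
rewrite (eq_bigr (fun q => (sg q.2 * (f q.1.1 * h q.1.2)) *: b u w)); last first.
  by move=> q _; rewrite !scalerA; congr (_ *: _); ring.
rewrite -scaler_suml.
have -> : \sum_(q <- l) sg q.2 * (f q.1.1 * h q.1.2) = 0.
  rewrite (eq_bigr (fun q => if q.2 then f q.1.1 * h q.1.2 else - (f q.1.1 * h q.1.2))).
    rewrite /l (sgE s t (fun p => f p.1 * h p.2)); have := Ht (mksc Hf) (mksc Hh); rewrite /= => ->; exact: subrr.
  by move=> [p []] _ /=; rewrite ?mul1r ?mulN1r.
by rewrite scale0r.
Qed.

Lemma teq3_tril (U V W N : lmodType C) (s t : seq (U * V * W)) (b : U -> V -> W -> N) :
  (forall v w, linear (fun u => b u v w)) -> (forall u w, linear (fun v => b u v w)) ->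
  (forall u v, linear (b u v)) -> teq3 s t ->
  \sum_(p <- s) b p.1.1 p.1.2 p.2 = \sum_(p <- t) b p.1.1 p.1.2 p.2.
Proof.
move=> H1 H2 H3 Ht; apply/eqP; rewrite -subr_eq0; apply/eqP.
set l := [seq (p, true) | p <- s] ++ [seq (p, false) | p <- t].
rewrite -(sgE s t (fun p => b p.1.1 p.1.2 p.2)).
rewrite (eq_bigr (fun q => (fun q u => sg q.2 *: b u q.1.1.2 q.1.2) q q.1.1.1)); last first.
  by move=> [p []] _ /=; rewrite ?scale1r ?scaleN1r.
apply: (key_seq (l := l) (a := fun q => q.1.1.1) (m := fun q u => sg q.2 *: b u q.1.1.2 q.1.2)).
  move=> q k x y /=; rewrite H1 scalerDr !scalerA mulrC //.
move=> e He u.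
apply: (key_seq (l := l) (a := fun q => q.1.1.2) (m := fun q v => e q.1.1.1 *: (sg q.2 *: b u v q.1.2))).
  move=> q k x y /=; rewrite H2 !scalerDr !scalerA; congr (_ *: _ + _); ring.
move=> f Hf v.
apply: (key_seq (l := l) (a := fun q => q.1.2) (m := fun q w => f q.1.1.2 *: (e q.1.1.1 *: (sg q.2 *: b u v w)))).
  move=> q k x y /=; rewrite H3 !scalerDr !scalerA; congr (_ *: _ + _); ring.
move=> h Hh w.
rewrite (eq_bigr (fun q => (sg q.2 * (e q.1.1.1 * f q.1.1.2 * h q.1.2)) *: b u v w)); last first.
  by move=> q _; rewrite !scalerA; congr (_ *: _); ring.
rewrite -scaler_suml.
have -> : \sum_(q <- l) sg q.2 * (e q.1.1.1 * f q.1.1.2 * h q.1.2) = 0.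
  rewrite (eq_bigr (fun q => if q.2 then e q.1.1.1 * f q.1.1.2 * h q.1.2
                             else - (e q.1.1.1 * f q.1.1.2 * h q.1.2))).
    rewrite /l (sgE s t (fun p => e p.1.1 * f p.1.2 * h p.2)); have := Ht (mksc He) (mksc Hf) (mksc Hh); rewrite /= => ->; exact: subrr.
  by move=> [p []] _ /=; rewrite ?mul1r ?mulN1r.
by rewrite scale0r.
Qed.

End TEQ.

Lemma scsE (R : realType) (a b : R[i]) : a *: b = a * b. Proof. by []. Qed.

Ltac linrw := repeat (match goal with
 | H : scalar ?f |- context [?f (?k *: ?x + ?y)] => rewrite (sc_lin H k x y)
 | H : linear ?f |- context [?f (?k *: ?x + ?y)] => rewrite (H k x y)
 end).
Ltac linnorm := do 3 rewrite ?scsE ?scalerDr ?scalerDl ?mulrDl ?mulrDr -?scalerAl -?scalerAr ?scalerA ?scsE.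
Ltac linfin := first [ by [] | ring | (congr (_ + _); first [ by [] | congr (_ *: _); ring | ring]) ].
Ltac lin_tac := let k := fresh "k" in let x := fresh "x" in let y := fresh "y" in
  move=> k x y /=; linrw; linnorm; linfin.

Lemma teq2I (R : realType) (V W : lmodType R[i]) (s t : seq (V * W)) :
  (forall (f : V -> R[i]) (h : W -> R[i]), scalar f -> scalar h ->
     \sum_(p <- s) f p.1 * h p.2 = \sum_(p <- t) f p.1 * h p.2) -> teq2 s t.
Proof. move=> Hc f h; apply: Hc; exact: linearP. Qed.

Section Hopf.
Variable R : realType.
Local Notation C := (R[i]).
Variables (A : algType C) (H : hopf_ops A).
Hypothesis HH : is_star_hopf H.
Local Notation cp := (cop H).
Local Notation eps := (cou H).
Local Notation S := (ant H).
Local Notation st := (star H).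

Definition bil (N : lmodType C) (b : A -> A -> N) :=
  (forall w, linear (b^~ w)) /\ (forall v, linear (b v)).
Definition tril (N : lmodType C) (b : A -> A -> A -> N) :=
  [/\ (forall v w, linear (fun u => b u v w)), (forall u w, linear (fun v => b u v w))
    & (forall u v, linear (b u v))].

Lemma copL k x y : teq2 (cp (k *: x + y)) (scale_left k (cp x) ++ cp y).
Proof. by case: HH => [[]]. Qed.
Lemma copM x y : teq2 (cp (x * y)) [seq (p.1 * q.1, p.2 * q.2) | p <- cp x, q <- cp y].
Proof. by case: HH => [[]]. Qed.
Lemma cop1 : teq2 (cp 1) [:: (1, 1)].
Proof. by case: HH => [[]]. Qed.
Lemma coassoc x : teq3 [seq (q.1, q.2, p.2) | p <- cp x, q <- cp p.1]
              [seq (p.1, q.1, q.2) | p <- cp x, q <- cp p.2].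
Proof. by case: HH => [[]]. Qed.
Lemma epsL : scalar eps.
Proof. by case: HH => _ [hl _ _ _ _] _ _ k x y; rewrite hl. Qed.
Lemma epsM x y : eps (x * y) = eps x * eps y.
Proof. by case: HH => _ []. Qed.
Lemma eps1 : eps 1 = 1.
Proof. by case: HH => _ []. Qed.
Lemma counitl x : \sum_(p <- cp x) eps p.1 *: p.2 = x.
Proof. by case: HH => _ []. Qed.
Lemma counitr x : \sum_(p <- cp x) eps p.2 *: p.1 = x.
Proof. by case: HH => _ []. Qed.
Lemma SL : linear S.
Proof. by case: HH => _ _ [hl _ _] _ k x y; rewrite hl. Qed.
Lemma antil x : \sum_(p <- cp x) S p.1 * p.2 = eps x *: 1.
Proof. by case: HH => _ _ []. Qed.
Lemma antir x : \sum_(p <- cp x) p.1 * S p.2 = eps x *: 1.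
Proof. by case: HH => _ _ []. Qed.
Lemma stL k x y : st (k *: x + y) = k^* *: st x + st y.
Proof. by case: HH => _ _ _ []. Qed.
Lemma stK x : st (st x) = x.
Proof. by case: HH => _ _ _ []. Qed.
Lemma stM x y : st (x * y) = st y * st x.
Proof. by case: HH => _ _ _ []. Qed.
Lemma copst x : teq2 (cp (st x)) [seq (st p.1, st p.2) | p <- cp x].
Proof. by case: HH => _ _ _ []. Qed.

Lemma sw_lin (N : lmodType C) (b : A -> A -> N) : bil b -> forall k x y,
  \sum_(p <- cp (k *: x + y)) b p.1 p.2 =
  k *: \sum_(p <- cp x) b p.1 p.2 + \sum_(p <- cp y) b p.1 p.2.
Proof.
move=> [b1 b2] k x y; rewrite (teq2_bil b1 b2 (copL k x y)) big_cat big_map /=.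
congr (_ + _); rewrite scaler_sumr; apply: eq_bigr => p _.
by rewrite -[k *: p.1]addr0 b1 (ln0 (b1 p.2)) addr0.
Qed.

Lemma sw_mul (N : lmodType C) (b : A -> A -> N) : bil b -> forall x y,
  \sum_(p <- cp (x * y)) b p.1 p.2 =
  \sum_(p <- cp x) \sum_(q <- cp y) b (p.1 * q.1) (p.2 * q.2).
Proof. by move=> [b1 b2] x y; rewrite (teq2_bil b1 b2 (copM x y)) big_allpairs_dep. Qed.

Lemma sw_one (N : lmodType C) (b : A -> A -> N) : bil b ->
  \sum_(p <- cp 1) b p.1 p.2 = b 1 1.
Proof. by move=> [b1 b2]; rewrite (teq2_bil b1 b2 cop1) big_seq1. Qed.

Lemma sw_assoc (N : lmodType C) (b : A -> A -> A -> N) : tril b -> forall x,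
  \sum_(p <- cp x) \sum_(q <- cp p.1) b q.1 q.2 p.2 =
  \sum_(p <- cp x) \sum_(q <- cp p.2) b p.1 q.1 q.2.
Proof.
move=> [b1 b2 b3] x; have := teq3_tril b1 b2 b3 (coassoc x).
by rewrite !big_allpairs_dep.
Qed.

Lemma sw_star (N : lmodType C) (b : A -> A -> N) : bil b -> forall x,
  \sum_(p <- cp (st x)) b p.1 p.2 = \sum_(p <- cp x) b (st p.1) (st p.2).
Proof. by move=> [b1 b2] x; rewrite (teq2_bil b1 b2 (copst x)) big_map. Qed.


Definition conv (f h : A -> C) x := \sum_(p <- cp x) f p.1 * h p.2.
Definition Lm (f : A -> C) x := \sum_(p <- cp x) f p.1 *: p.2.
Definition Rm (f : A -> C) x := \sum_(p <- cp x) f p.2 *: p.1.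
Definition starc (F G : A -> A) x := \sum_(p <- cp x) F p.1 * G p.2.
Definition ee x : A := eps x *: 1.

Lemma conv_lin f h : scalar f -> scalar h -> scalar (conv f h).
Proof.
move=> Hf Hh k x y; rewrite /conv (sw_lin (b := fun a c => f a * h c)) //.
split => [w|v]; lin_tac.
Qed.

Lemma Lm_lin f : scalar f -> linear (Lm f).
Proof.
move=> Hf k x y; rewrite /Lm (sw_lin (b := fun a c => f a *: c)) //.
split => [w|v]; lin_tac.
Qed.

Lemma Rm_lin f : scalar f -> linear (Rm f).
Proof.
move=> Hf k x y; rewrite /Rm (sw_lin (b := fun a c => f c *: a)) //.
split => [w|v]; lin_tac.
Qed.

Lemma starc_lin F G : linear F -> linear G -> linear (starc F G).
Proof.
move=> HF HG k x y; rewrite /starc (sw_lin (b := fun a c => F a * G c)) //.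
split => [w|v]; lin_tac.
Qed.


Lemma sc_comp (f : A -> C) (F : A -> A) : scalar f -> linear F -> scalar (fun a => f (F a)).
Proof. by move=> Hf HF k x y /=; rewrite HF Hf. Qed.
Lemma ln_comp (F G : A -> A) : linear F -> linear G -> linear (fun a => F (G a)).
Proof. by move=> HF HG k x y /=; rewrite HG HF. Qed.
Lemma id_lin : linear (fun a : A => a).
Proof. by []. Qed.

Create HintDb scdb.
Hint Resolve conv_lin Lm_lin Rm_lin starc_lin epsL SL sc_comp ln_comp id_lin : scdb.
Ltac sc := solve [auto with scdb].

Lemma conv_assoc f g h : scalar f -> scalar g -> scalar h ->
  conv (conv f g) h = conv f (conv g h).
Proof.
move=> Hf Hg Hh; apply: funext => x; rewrite /conv.
under eq_bigr do rewrite mulr_suml.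
rewrite (sw_assoc (b := fun a b c => f a * g b * h c)); last first.
  split => *; lin_tac.
by apply: eq_bigr => p _; rewrite mulr_sumr; apply: eq_bigr => q _; rewrite mulrA.
Qed.

Lemma conv_epsl f : scalar f -> conv eps f = f.
Proof.
move=> Hf; apply: funext => x; rewrite /conv -{2}(counitl x) (sc_sum Hf).
by apply: eq_bigr => p _; rewrite (scZ Hf).
Qed.

Lemma conv_epsr f : scalar f -> conv f eps = f.
Proof.
move=> Hf; apply: funext => x; rewrite /conv -{2}(counitr x) (sc_sum Hf).
by apply: eq_bigr => p _; rewrite (scZ Hf) mulrC.
Qed.

Lemma scL f g x : scalar f -> scalar g -> g (Lm f x) = conv f g x.
Proof.
move=> Hf Hg; rewrite /Lm /conv (sc_sum Hg); apply: eq_bigr => p _; by rewrite (scZ Hg).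
Qed.

Lemma scR f g x : scalar f -> scalar g -> g (Rm f x) = conv g f x.
Proof.
move=> Hf Hg; rewrite /Rm /conv (sc_sum Hg); apply: eq_bigr => p _; by rewrite (scZ Hg) mulrC.
Qed.

Lemma LmL f g x : scalar f -> scalar g -> Lm f (Lm g x) = Lm (conv g f) x.
Proof.
move=> Hf Hg; rewrite {2}/Lm (ln_sum (Lm_lin Hf)).
under eq_bigr do rewrite (lnZ (Lm_lin Hf)) /Lm scaler_sumr.
under eq_bigr do under eq_bigr do rewrite scalerA.
rewrite -(sw_assoc (b := fun a b c => (g a * f b) *: c)); last first.
  split => *; lin_tac.
by rewrite /Lm; apply: eq_bigr => p _; rewrite /conv scaler_suml.
Qed.

Lemma RmR f g x : scalar f -> scalar g -> Rm f (Rm g x) = Rm (conv f g) x.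
Proof.
move=> Hf Hg; rewrite {2}/Rm (ln_sum (Rm_lin Hf)).
under eq_bigr do rewrite (lnZ (Rm_lin Hf)) /Rm scaler_sumr.
under eq_bigr do under eq_bigr do rewrite scalerA.
rewrite (sw_assoc (b := fun a b c => (g c * f b) *: a)); last first.
  split => *; lin_tac.
by apply: eq_bigr => p _; rewrite /conv scaler_suml; apply: eq_bigr => q _; rewrite mulrC.
Qed.

Lemma LmR f g x : scalar f -> scalar g -> Lm f (Rm g x) = Rm g (Lm f x).
Proof.
move=> Hf Hg; rewrite {1}/Rm (ln_sum (Lm_lin Hf)) {2}/Lm (ln_sum (Rm_lin Hg)).
under eq_bigr do rewrite (lnZ (Lm_lin Hf)) /Lm scaler_sumr.
under eq_bigr do under eq_bigr do rewrite scalerA.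
under [RHS]eq_bigr do rewrite (lnZ (Rm_lin Hg)) /Rm scaler_sumr.
under [RHS]eq_bigr do under eq_bigr do rewrite scalerA.
rewrite (sw_assoc (b := fun a b c => (g c * f a) *: b)); last first.
  split => *; lin_tac.
by apply: eq_bigr => p _; apply: eq_bigr => q _; rewrite mulrC.
Qed.

Lemma Lm_eps x : Lm eps x = x.
Proof. exact: counitl. Qed.
Lemma Rm_eps x : Rm eps x = x.
Proof. exact: counitr. Qed.

Lemma eps_Lm f x : scalar f -> eps (Lm f x) = f x.
Proof. by move=> Hf; rewrite scL // ?conv_epsr //; exact: epsL. Qed.
Lemma eps_Rm f x : scalar f -> eps (Rm f x) = f x.
Proof. by move=> Hf; rewrite scR // ?conv_epsl //; exact: epsL. Qed.

Definition chr (f : A -> C) := [/\ scalar f, (forall x y, f (x * y) = f x * f y) & f 1 = 1].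

Lemma Lm_mul f x y : chr f -> Lm f (x * y) = Lm f x * Lm f y.
Proof.
move=> [Hf fM f1]; rewrite /Lm (sw_mul (b := fun a c => f a *: c)); last first.
  split => *; lin_tac.
rewrite mulr_suml; apply: eq_bigr => p _; rewrite mulr_sumr; apply: eq_bigr => q _.
by rewrite fM -scalerAl -scalerAr scalerA.
Qed.

Lemma Rm_mul f x y : chr f -> Rm f (x * y) = Rm f x * Rm f y.
Proof.
move=> [Hf fM f1]; rewrite /Rm (sw_mul (b := fun a c => f c *: a)); last first.
  split => *; lin_tac.
rewrite mulr_suml; apply: eq_bigr => p _; rewrite mulr_sumr; apply: eq_bigr => q _.
by rewrite fM -scalerAl -scalerAr scalerA.
Qed.

Lemma Lm_one f : chr f -> Lm f 1 = 1.
Proof.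
move=> [Hf fM f1]; rewrite /Lm (sw_one (b := fun a c => f a *: c)) ?f1 ?scale1r //.
split => *; lin_tac.
Qed.

Lemma Rm_one f : chr f -> Rm f 1 = 1.
Proof.
move=> [Hf fM f1]; rewrite /Rm (sw_one (b := fun a c => f c *: a)) ?f1 ?scale1r //.
split => *; lin_tac.
Qed.


Lemma eps_S x : eps (S x) = eps x.
Proof.
rewrite -{1}(counitr x) (ln_sum SL) (sc_sum epsL).
have E := congr1 eps (antil x); rewrite (scZ epsL) eps1 mulr1 in E.
rewrite -E (sc_sum epsL); apply: eq_bigr => p _.
by rewrite (lnZ SL) (scZ epsL) epsM mulrC.
Qed.

Lemma starc_assoc F G K : linear F -> linear G -> linear K ->
  starc F (starc G K) = starc (starc F G) K.
Proof.
move=> HF HG HK; apply: funext => x; rewrite /starc.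
under [RHS]eq_bigr do rewrite mulr_suml.
rewrite (sw_assoc (b := fun a b c => F a * G b * K c)); last first.
  split => *; lin_tac.
by apply: eq_bigr => p _; rewrite mulr_sumr; apply: eq_bigr => q _; rewrite mulrA.
Qed.

Lemma starc_eel F : linear F -> starc ee F = F.
Proof.
move=> HF; apply: funext => x; rewrite /starc /ee -{2}(counitl x) (ln_sum HF).
by apply: eq_bigr => p _; rewrite (lnZ HF) -scalerAl mul1r.
Qed.

Lemma starc_eer F : linear F -> starc F ee = F.
Proof.
move=> HF; apply: funext => x; rewrite /starc /ee -{2}(counitr x) (ln_sum HF).
by apply: eq_bigr => p _; rewrite (lnZ HF) -scalerAr mulr1.
Qed.

Lemma ee_lin : linear ee.
Proof. by move=> k x y; rewrite /ee epsL scalerDl scalerA. Qed.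

Lemma starc_uniq F G G' : linear F -> linear G -> linear G' ->
  starc F G = ee -> starc G' F = ee -> G' = G.
Proof.
move=> HF HG HG' E1 E2.
by rewrite -(starc_eer HG') -E1 starc_assoc // E2 starc_eel.
Qed.

Ltac linrw ::= repeat (match goal with
 | H : scalar ?f |- context [?f (?k *: ?x + ?y)] => rewrite (sc_lin H k x y)
 | H : linear ?f |- context [?f (?k *: ?x + ?y)] => rewrite (H k x y)
 | H : scalar ?f |- context [Rm ?f (?k *: ?x + ?y)] => rewrite (Rm_lin H k x y)
 | H : scalar ?f |- context [Lm ?f (?k *: ?x + ?y)] => rewrite (Lm_lin H k x y)
 | |- context [S (?k *: ?x + ?y)] => rewrite (SL k x y)
 | |- context [eps (?k *: ?x + ?y)] => rewrite (epsL k x y)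
 end).

Lemma LS f x : chr f -> conv f (fun a => f (S a)) = eps ->
  Lm f (S x) = S (Rm (fun a => f (S a)) x).
Proof.
move=> cf E; case: (cf) => Hf fM f1.
set psi := fun a => f (S a).
have Hpsi : scalar psi by rewrite /psi; sc.
suff : (fun a => Lm f (S a)) = (fun a => S (Rm psi a)) by move/(congr1 (fun F => F x)).
apply: (@starc_uniq (Lm f)); try sc.
- apply: funext => y; rewrite /starc.
  transitivity (\sum_(p <- cp y) \sum_(q <- cp p.1) f q.1 *: (q.2 * S (Rm psi p.2))).
    apply: eq_bigr => p _; rewrite /Lm mulr_suml; apply: eq_bigr => q _; by rewrite -scalerAl.
  rewrite (sw_assoc (b := fun a b c => f a *: (b * S (Rm psi c)))); last first.
    have HSR : linear (fun c => S (Rm psi c)) by sc.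
    split => *; lin_tac.
  have inner z : \sum_(q <- cp z) q.1 * S (Rm psi q.2) = psi z *: 1.
    transitivity (\sum_(p <- cp z) \sum_(q <- cp p.2) psi q.2 *: (p.1 * S q.1)).
      apply: eq_bigr => p _; rewrite /Rm (ln_sum SL) mulr_sumr; apply: eq_bigr => q _.
      by rewrite (lnZ SL) -scalerAr.
    rewrite -(sw_assoc (b := fun a b c => psi c *: (a * S b))); last first.
      split => *; lin_tac.
    under eq_bigr do rewrite -scaler_sumr antir scalerA.
    rewrite -scaler_suml; congr (_ *: _).
    by have := congr1 (fun h => h z) (conv_epsl Hpsi); rewrite /conv /=; under eq_bigr do rewrite mulrC.
  under eq_bigr do rewrite -scaler_sumr inner scalerA.
  by rewrite -scaler_suml /ee -[in RHS]E.
- apply: funext => y; rewrite /starc.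
  under eq_bigr do rewrite -Lm_mul //.
  by rewrite -(ln_sum (Lm_lin Hf)) antil (lnZ (Lm_lin Hf)) Lm_one.
Qed.


Lemma RS f x : chr f -> conv f (fun a => f (S a)) = eps ->
  Rm f (S x) = S (Lm (fun a => f (S a)) x).
Proof.
move=> cf E; case: (cf) => Hf fM f1.
set psi := fun a => f (S a).
have Hpsi : scalar psi by rewrite /psi; sc.
suff : (fun a => Rm f (S a)) = (fun a => S (Lm psi a)) by move/(congr1 (fun F => F x)).
apply: (@starc_uniq (Rm f)); try sc.
- apply: funext => y; rewrite /starc.
  transitivity (\sum_(p <- cp y) \sum_(q <- cp p.1) f q.2 *: (q.1 * S (Lm psi p.2))).
    apply: eq_bigr => p _; rewrite /Rm mulr_suml; apply: eq_bigr => q _; by rewrite -scalerAl.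
  rewrite (sw_assoc (b := fun a b c => f b *: (a * S (Lm psi c)))); last first.
    split => *; lin_tac.
  transitivity (\sum_(p <- cp y) p.1 * S (Lm psi (Lm f p.2))).
    apply: eq_bigr => p _; rewrite [Lm f _]/Lm (ln_sum (Lm_lin Hpsi)) (ln_sum SL) mulr_sumr.
    by apply: eq_bigr => q _; rewrite (lnZ (Lm_lin Hpsi)) (lnZ SL) -scalerAr.
  under eq_bigr do rewrite LmL // E Lm_eps.
  by rewrite antir.
- apply: funext => y; rewrite /starc.
  under eq_bigr do rewrite -Rm_mul //.
  by rewrite -(ln_sum (Rm_lin Hf)) antil (lnZ (Rm_lin Hf)) Rm_one.
Qed.

Lemma SL_comm f x : chr f -> conv f (fun a => f (S a)) = eps ->
  conv (fun a => f (S a)) f = eps ->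
  S (Lm f x) = Rm (fun a => f (S a)) (S x).
Proof.
move=> cf E1 E2; case: (cf) => Hf fM f1.
have Hpsi : scalar (fun a => f (S a)) by sc.
have := RS (Lm f x) cf E1; rewrite LmL // E1 Lm_eps => <-.
by rewrite RmR // E2 Rm_eps.
Qed.

Lemma fSS f x : chr f -> conv f (fun a => f (S a)) = eps ->
  conv (fun a => f (S a)) f = eps -> f (S (S x)) = f x.
Proof.
move=> cf E1 E2; case: (cf) => Hf fM f1.
have Hpsi : scalar (fun a => f (S a)) by sc.
have := congr1 eps (SL_comm x cf E1 E2).
by rewrite eps_S eps_Lm // eps_Rm.
Qed.


Lemma st_add x y : st (x + y) = st x + st y.
Proof. by rewrite -[x]scale1r stL rmorph1 !scale1r. Qed.
Lemma st0 : st 0 = 0.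
Proof. by apply: (@addrI _ (st 0)); rewrite -st_add !addr0. Qed.
Lemma stZ k x : st (k *: x) = k^* *: st x.
Proof. by rewrite -[k *: x]addr0 stL st0 addr0. Qed.
Lemma st_sum I (r : seq I) (F : I -> A) : st (\sum_(i <- r) F i) = \sum_(i <- r) st (F i).
Proof. exact: (big_morph _ st_add st0). Qed.

Definition bar (f : A -> C) := fun a => (f (st a))^*.

Lemma bar_lin f : scalar f -> scalar (bar f).
Proof.
move=> Hf k x y; rewrite /bar stL Hf rmorphD rmorphM /= conjCK //.
Qed.

Lemma Lm_st f y : scalar f -> Lm f (st y) = st (Lm (bar f) y).
Proof.
move=> Hf; rewrite /Lm (sw_star (b := fun a c => f a *: c)); last first.
  split => *; lin_tac.
by rewrite st_sum; apply: eq_bigr => p _; rewrite stZ /bar conjCK.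
Qed.

Lemma Rm_st f y : scalar f -> Rm f (st y) = st (Rm (bar f) y).
Proof.
move=> Hf; rewrite /Rm (sw_star (b := fun a c => f c *: a)); last first.
  split => *; lin_tac.
by rewrite st_sum; apply: eq_bigr => p _; rewrite stZ /bar conjCK.
Qed.

Lemma eps_st y : eps (st y) = (eps y)^*.
Proof.
have Hb : scalar (bar eps) by apply: bar_lin; exact: epsL.
have E : Lm (bar eps) y = y.
  by rewrite -[RHS]stK -[Lm _ _]stK -Lm_st ?Lm_eps //; exact: epsL.
have := eps_Lm y Hb; rewrite E /bar => ->; by rewrite conjCK.
Qed.

Lemma Ad_E (f : A -> C) x : scalar f -> Ad H f x = Rm f (Lm (fun a => f (S a)) x).
Proof.
move=> Hf; rewrite /Ad /Lm (ln_sum (Rm_lin Hf)); apply: eq_bigr => p _.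
by rewrite (lnZ (Rm_lin Hf)) /Rm scaler_sumr; apply: eq_bigr => q _; rewrite scalerA.
Qed.

Lemma conv_Lm f h phi x : scalar f -> scalar h -> scalar phi ->
  conv f h (Lm phi x) = conv (conv phi f) h x.
Proof. by move=> Hf Hh Hp; rewrite scL // ?conv_assoc //; sc. Qed.

Lemma conv_Rm f h psi x : scalar f -> scalar h -> scalar psi ->
  conv f h (Rm psi x) = conv f (conv h psi) x.
Proof. by move=> Hf Hh Hp; rewrite scR // ?conv_assoc //; sc. Qed.

Lemma conv_RL f h phi psi x : scalar f -> scalar h -> scalar phi -> scalar psi ->
  conv phi psi = eps ->
  conv f h (Rm phi (Lm psi x)) =
  conv (fun a => f (Rm phi (Lm psi a))) (fun a => h (Rm phi (Lm psi a))) x.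
Proof.
move=> Hf Hh Hp Hq E.
have -> : (fun a => f (Rm phi (Lm psi a))) = conv psi (conv f phi).
  by apply: funext => a; rewrite scR // scL //; sc.
have -> : (fun a => h (Rm phi (Lm psi a))) = conv psi (conv h phi).
  by apply: funext => a; rewrite scR // scL //; sc.
rewrite conv_Rm // conv_Lm //; try sc.
rewrite conv_assoc; try sc.
rewrite [conv (conv psi _) _]conv_assoc; try sc.
rewrite [conv (conv f phi) _]conv_assoc; try sc.
rewrite -[conv phi (conv psi _)]conv_assoc; try sc.
by rewrite E conv_epsl; try sc.
Qed.


Lemma homspE (K : lmodType C) (rho : A -> K) a : homsp H rho a <->
  forall f h, scalar f -> scalar h -> conv f (fun z => h (rho z)) a = f a * h (rho 1).
Proof.
split.
  by move=> Hs f h Hf Hh; have := Hs (mksc Hf) (mksc Hh); rewrite big_map big_seq1.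
by move=> Hc f h; rewrite big_map big_seq1; apply: Hc; exact: linearP.
Qed.

Section Char.
Variable g : A -> C.
Hypothesis Hg : is_character H g.

Lemma gL : scalar g.
Proof. by case: Hg => h _ _ _ k x y; rewrite h. Qed.
Lemma gM x y : g (x * y) = g x * g y.
Proof. by case: Hg. Qed.
Lemma g1 : g 1 = 1.
Proof. by case: Hg. Qed.
Lemma gst x : g (st x) = (g x)^*.
Proof. by case: Hg. Qed.
Lemma chr_g : chr g.
Proof. split; [exact: gL | exact: gM | exact: g1]. Qed.

Local Notation gS := (fun a => g (S a)).
Lemma gSL : scalar gS.
Proof. have := gL; sc. Qed.
Hint Resolve gL gSL : scdb.

Lemma conv_g_gS : conv g gS = eps.
Proof.
apply: funext => x; rewrite /conv.
under eq_bigr do rewrite -gM.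
by rewrite -(sc_sum gL) antir (scZ gL) g1 mulr1.
Qed.

Lemma conv_gS_g : conv gS g = eps.
Proof.
apply: funext => x; rewrite /conv.
under eq_bigr do rewrite -gM.
by rewrite -(sc_sum gL) antil (scZ gL) g1 mulr1.
Qed.

Lemma gSS x : g (S (S x)) = g x.
Proof. exact: (fSS x chr_g conv_g_gS conv_gS_g). Qed.

Lemma bar_g : bar g = g.
Proof. by apply: funext => a; rewrite /bar gst conjCK. Qed.

Lemma bar_gS : bar gS = gS.
Proof.
have Hk : scalar (bar gS) by apply: bar_lin; sc.
have E : conv (bar gS) g = eps.
  apply: funext => x; rewrite /conv /bar.
  transitivity ((\sum_(p <- cp x) g (S (st p.1)) * g (st p.2))^* ).
    rewrite rmorph_sum; apply: eq_bigr => p _; by rewrite rmorphM /= gst conjCK.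
  rewrite -(sw_star (b := fun a c => g (S a) * g c)); last first.
    have := gL; have := gSL => *; split => *; lin_tac.
  by have := congr1 (fun h => h (st x)) conv_gS_g; rewrite /conv /= => ->; rewrite eps_st conjCK.
rewrite -(conv_epsr Hk) -conv_g_gS -conv_assoc; try sc.
by rewrite E conv_epsl; sc.
Qed.

Definition Adg x := Rm g (Lm gS x).
Definition Adi x := Rm gS (Lm g x).

Lemma AdgE x : Ad H g x = Adg x.
Proof. by rewrite Ad_E //; exact: gL. Qed.
Lemma AdiE x : Ad H gS x = Adi x.
Proof.
rewrite Ad_E; last sc.
by have -> : (fun a => g (S (S a))) = g by apply: funext => a; rewrite gSS.
Qed.

Lemma Adg_lin : linear Adg.
Proof. rewrite /Adg; sc. Qed.
Lemma Adi_lin : linear Adi.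
Proof. rewrite /Adi; sc. Qed.

Lemma Lm_gSg x : Lm gS (Lm g x) = x.
Proof. by rewrite LmL ?conv_g_gS ?Lm_eps //; sc. Qed.
Lemma Lm_ggS x : Lm g (Lm gS x) = x.
Proof. by rewrite LmL ?conv_gS_g ?Lm_eps //; sc. Qed.
Lemma Rm_gSg x : Rm gS (Rm g x) = x.
Proof. by rewrite RmR ?conv_gS_g ?Rm_eps //; sc. Qed.
Lemma Rm_ggS x : Rm g (Rm gS x) = x.
Proof. by rewrite RmR ?conv_g_gS ?Rm_eps //; sc. Qed.

Lemma Adg_Adi x : Adg (Adi x) = x.
Proof. by rewrite /Adg /Adi LmR ?Lm_gSg ?Rm_ggS //; sc. Qed.
Lemma Adi_Adg x : Adi (Adg x) = x.
Proof. by rewrite /Adg /Adi LmR ?Lm_ggS ?Rm_gSg //; sc. Qed.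

Lemma LgS_mul x y : Lm gS (x * y) = Lm gS x * Lm gS y.
Proof.
by rewrite -{1}(Lm_ggS x) -{1}(Lm_ggS y) -(Lm_mul (Lm gS x) (Lm gS y) chr_g) Lm_gSg.
Qed.
Lemma RgS_mul x y : Rm gS (x * y) = Rm gS x * Rm gS y.
Proof.
by rewrite -{1}(Rm_ggS x) -{1}(Rm_ggS y) -(Rm_mul (Rm gS x) (Rm gS y) chr_g) Rm_gSg.
Qed.

Lemma Adg_mul x y : Adg (x * y) = Adg x * Adg y.
Proof. by rewrite /Adg LgS_mul Rm_mul //; exact: chr_g. Qed.
Lemma Adi_mul x y : Adi (x * y) = Adi x * Adi y.
Proof. by rewrite /Adi Lm_mul ?RgS_mul //; exact: chr_g. Qed.

Lemma Adg_one : Adg 1 = 1.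
Proof. by rewrite /Adg -{1}(Lm_one chr_g) Lm_gSg Rm_one //; exact: chr_g. Qed.
Lemma Adi_one : Adi 1 = 1.
Proof. by rewrite /Adi (Lm_one chr_g) -{1}(Rm_one chr_g) Rm_gSg. Qed.

Lemma eps_Adg x : eps (Adg x) = eps x.
Proof. by rewrite /Adg eps_Rm ?scL ?conv_gS_g //; sc. Qed.
Lemma eps_Adi x : eps (Adi x) = eps x.
Proof.
rewrite /Adi eps_Rm; last sc.
rewrite (SL_comm _ chr_g conv_g_gS conv_gS_g) scR ?conv_g_gS ?eps_S //; sc.
Qed.

Lemma conv_Adg f h x : scalar f -> scalar h ->
  conv f h (Adg x) = conv (fun a => f (Adg a)) (fun a => h (Adg a)) x.
Proof. move=> Hf Hh; rewrite /Adg conv_RL //; try sc; exact: conv_g_gS. Qed.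
Lemma conv_Adi f h x : scalar f -> scalar h ->
  conv f h (Adi x) = conv (fun a => f (Adi a)) (fun a => h (Adi a)) x.
Proof. move=> Hf Hh; rewrite /Adi conv_RL //; try sc; exact: conv_gS_g. Qed.

Lemma tau_Adi x : Adi (st (S x)) = st (S (Adi x)).
Proof.
have HgL := gL; have HgSL := gSL.
rewrite /Adi Lm_st // bar_g Rm_st // bar_gS; congr st.
rewrite (LS _ chr_g conv_g_gS).
rewrite -(SL_comm _ chr_g conv_g_gS conv_gS_g).
by rewrite LmR.
Qed.

End Char.

End Hopf.

Section Main.
Variables (R : realType) (A : algType R[i]) (H : hopf_ops A) (K : lmodType R[i])
  (O : cqs_ops A K) (r : A -> K) (g : A -> R[i]).
Hypotheses (HH : is_star_hopf H) (Hg : is_character H g) (Hr : is_rcqs H O r).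
Local Notation C := (R[i]).
Local Notation Ag := (Adg H g).
Local Notation Ai := (Adi H g).

Lemma rL : linear r.
Proof. by case: Hr => _ _ [h _ _ _] _ k x y; rewrite h. Qed.
Lemma rsurj k : exists x, r x = k.
Proof. by case: Hr => _ _ [_ h _ _] _. Qed.
Lemma rcopt x : teq2 (kcop O (r x)) [seq (r p.1, r p.2) | p <- cop H x].
Proof. by case: Hr => _ _ [_ _ h _] _; case: (h x). Qed.
Lemma rcou x : kcou O (r x) = cou H x.
Proof. by case: Hr => _ _ [_ _ h _] _; case: (h x). Qed.
Lemma rmod x y : r (x * y) = kact O (r x) y.
Proof. by case: Hr => _ _ [_ _ _ h] _. Qed.
Lemma ktau_r x : ktau O (r x) = r (tau H x).
Proof. by case: Hr => _ _ _ [_ h]. Qed.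
Lemma kact0 y : kact O 0 y = 0.
Proof.
case: Hr => _ [h _ _ _] _ _.
by apply: (ln0 (f := fun k => kact O k y)) => a k l; rewrite h.
Qed.
Lemma ktau0 : ktau O 0 = 0.
Proof.
case: Hr => _ _ _ [h _].
have := h 1 0 0; rewrite scale1r addr0 rmorph1 scale1r => E.
by apply: (@addrI _ (ktau O 0)); rewrite -E addr0.
Qed.
Lemma kcou0 : kcou O 0 = 0.
Proof.
case: Hr => [[_ h _ _ _]] _ _ _.
by apply: (sc0 (f := kcou O)) => a k l; rewrite h.
Qed.
Lemma kcop0 (F G : K -> C) : scalar F -> scalar G ->
  \sum_(p <- kcop O 0) F p.1 * G p.2 = 0.
Proof.
move=> HF HG; case: Hr => [[h _ _ _ _]] _ _ _.
have := h 1 0 0 (mksc HF) (mksc HG); rewrite scale1r addr0 big_cat big_map /=.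
under [X in _ = X + _]eq_bigr do rewrite scale1r.
by move=> E; apply: (@addrI _ (\sum_(p <- kcop O 0) F p.1 * G p.2)); rewrite -E addr0.
Qed.

Lemma sc_compK (f : K -> C) : scalar f -> scalar (fun a => f (r a)).
Proof. by move=> Hf k x y /=; rewrite rL Hf. Qed.

Lemma Adg_linH : linear Ag. Proof. exact: Adg_lin. Qed.
Lemma Adi_linH : linear Ai. Proof. exact: Adi_lin. Qed.

Lemma kerQQ (F G : A -> C) y : scalar F -> scalar G ->
  (forall a, r a = 0 -> F a = 0) -> (forall a, r a = 0 -> G a = 0) -> r y = 0 ->
  \sum_(p <- cop H y) F p.1 * G p.2 = 0.
Proof.
move=> HF HG FK GK ry.
pose pre k := projT1 (cid (rsurj k)).
have preE k : r (pre k) = k := projT2 (cid (rsurj k)).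
have ext (X : A -> C) : scalar X -> (forall a, r a = 0 -> X a = 0) ->
    exists X' : K -> C, scalar X' /\ forall a, X' (r a) = X a.
  move=> HX XK; exists (fun k => X (pre k)).
  have Xr a : X (pre (r a)) = X a.
    apply/eqP; rewrite -subr_eq0 -(scN HX) -(scD HX); apply/eqP; apply: XK.
    by rewrite (lnD rL) (lnN rL) preE subrr.
  split => // c k l.
  rewrite -{1}(preE k) -{1}(preE l) -rL Xr; exact: HX.
have [F' [HF' F'E]] := ext F HF FK.
have [G' [HG' G'E]] := ext G HG GK.
under eq_bigr do rewrite -F'E -G'E.
have := rcopt y (mksc HF') (mksc HG'); rewrite big_map /= => <-.
by rewrite ry; exact: kcop0.
Qed.

Lemma coid_r y : r y = 0 -> exists s, teq2 s (cop H (Ag y)) /\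
  forall p, p \in s -> r (Ai p.1) = 0 \/ r (Ai p.2) = 0.
Proof.
move=> ry.
have sU : subsp (fun a => r a = 0).
  split; first exact: (ln0 rL).
  by move=> c a b Ha Hb; rewrite rL Ha Hb scaler0 addr0.
have [P [Plin PU Pid]] := proj_ex sU.
pose Q a := a - P a.
have Qlin : linear Q by move=> k a b; rewrite /Q Plin scalerBr opprD addrACA.
have QK a : r a = 0 -> Q a = 0 by move=> ra; rewrite /Q Pid // subrr.
have PQ a : a = P a + Q a by rewrite /Q addrC subrK.
have AgL := Adg_linH.
exists ([seq (Ag (P p.1), Ag p.2) | p <- cop H y] ++ [seq (Ag (Q p.1), Ag (P p.2)) | p <- cop H y]).
split.
- apply: teq2I => f h Hf Hh.
  rewrite big_cat !big_map /=.
  transitivity (conv H f h (Ag y)); last by [].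
  rewrite conv_Adg // /conv.
  have QQ : \sum_(p <- cop H y) f (Ag (Q p.1)) * h (Ag (Q p.2)) = 0.
    apply: (kerQQ (F := fun a => f (Ag (Q a))) (G := fun a => h (Ag (Q a)))) => //.
    + move=> k a b /=; by rewrite Qlin AgL Hf.
    + move=> k a b /=; by rewrite Qlin AgL Hh.
    + by move=> a ra; rewrite QK // (ln0 AgL) (sc0 Hf).
    + by move=> a ra; rewrite QK // (ln0 AgL) (sc0 Hh).
  have E p : f (Ag p.1) * h (Ag p.2) = f (Ag (P p.1)) * h (Ag p.2) +
      f (Ag (Q p.1)) * h (Ag (P p.2)) + f (Ag (Q p.1)) * h (Ag (Q p.2)).
    have e1 : f (Ag p.1) = f (Ag (P p.1)) + f (Ag (Q p.1)) by rewrite -(scD Hf) -(lnD AgL) -PQ.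
    have e2 : h (Ag p.2) = h (Ag (P p.2)) + h (Ag (Q p.2)) by rewrite -(scD Hh) -(lnD AgL) -PQ.
    rewrite e1 e2; ring.
  under [RHS]eq_bigr do rewrite E.
  by rewrite !big_split /= QQ addr0.
- move=> p; rewrite mem_cat => /orP [] /mapP [q _ ->] /=; [left|right];
    by rewrite (Adi_Adg HH Hg) PU.
Qed.


Lemma part_ideal : is_tau_rideal_coideal H (fun x => r (Ai x) = 0).
Proof.
have AiL := Adi_linH.
split.
- by rewrite (ln0 AiL) (ln0 rL).
- by move=> a x y Hx Hy; rewrite AiL rL Hx Hy scaler0 addr0.
- by move=> x y Hx; rewrite (Adi_mul HH Hg) rmod Hx kact0.
- move=> x Hx; rewrite /tau (tau_Adi HH Hg).
  by rewrite -[r (star H (ant H (Ai x)))]ktau_r Hx ktau0.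
- move=> x Hx; split.
    by rewrite -(eps_Adi HH Hg) -rcou Hx kcou0.
  have [s [Hs Hm]] := coid_r Hx.
  by exists s; split => //; rewrite (Adg_Adi HH Hg) in Hs.
Qed.

Lemma part_Kg : exists (Kg : lmodType R[i]) (Og : cqs_ops A Kg) (r' : A -> Kg),
  is_rcqs H Og r' /\ forall x, r' x = 0 <-> r (Ai x) = 0.
Proof.
exists K, (CqsOps (kcop O) (kcou O) (fun k x => kact O k (Ai x)) (ktau O)), (fun x => r (Ai x)).
split => //.
have AiL := Adi_linH.
case: Hr => Hco [m1 m2 m3 m4] [r1 r2 r3 r4] [t1 t2].
split => //=.
- split => //.
  + by move=> a k x y; rewrite AiL m2.
  + by move=> k; rewrite (Adi_one HH Hg) m3.
  + by move=> k x y; rewrite m4 (Adi_mul HH Hg).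
- split.
  + by move=> a x y; rewrite AiL r1.
  + by move=> k; have [z <-] := r2 k; exists (Ag z); rewrite (Adi_Adg HH Hg).
  + move=> x; split; last by rewrite (r3 _).2 (eps_Adi HH Hg).
    apply: teq2I => f h Hf Hh.
    have := (r3 (Ai x)).1 (mksc Hf) (mksc Hh); rewrite /= => ->.
    rewrite !big_map /=.
    exact: (conv_Adi HH Hg x (sc_compK Hf) (sc_compK Hh)).
  + by move=> x y; rewrite (Adi_mul HH Hg) r4.
- split => // x; by rewrite t2 /tau (tau_Adi HH Hg).
Qed.

Lemma part_homsp a : homsp H (fun x => r (Ai x)) a <-> exists b, homsp H r b /\ a = Ag b.
Proof.
split.
- move=> /homspE Ha; exists (Ai a); split; last by rewrite (Adg_Adi HH Hg).
  apply/homspE => f h Hf Hh.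
  rewrite (conv_Adi HH Hg) //; last exact: sc_compK.
  by rewrite Ha; [rewrite (Adi_one HH Hg) | exact: sc_comp (Adi_linH) | exact: Hh].
- move=> [b [/homspE Hb ->]]; apply/homspE => f h Hf Hh.
  rewrite (conv_Adg HH Hg) //; last first.
    by move=> k x y /=; rewrite Adi_linH rL Hh.
  have -> : (fun a0 => h (r (Ai (Ag a0)))) = (fun a0 => h (r a0)).
    by apply: funext => z; rewrite (Adi_Adg HH Hg).
  rewrite Hb ?(Adi_one HH Hg) //; exact: sc_comp (Adg_linH).
Qed.


Local Notation gS := (fun a => g (ant H a)).

Lemma part_iso : lcomod_alg_iso H (homsp H r) (homsp H (fun x => r (Ai x))).
Proof.
have HgL := gL Hg; have HgSL : scalar gS := gSL HH Hg.
have AiL := Adi_linH.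
have hrA (h : K -> C) : scalar h -> scalar (fun z => h (r (Ai z))).
  by move=> Hh k x y /=; rewrite AiL rL Hh.
exists (Rm H g); split.
- move=> a /homspE Ha; apply/homspE => f h Hf Hh.
  rewrite (conv_Rm HH) //; last exact: hrA.
  have -> : conv H (fun z => h (r (Ai z))) g = conv H g (fun z => h (r z)).
    apply: funext => z; rewrite -(scR H) //; last exact: hrA.
    rewrite /Adi (LmR HH) // (Rm_gSg HH Hg); exact: (scL H z HgL (sc_compK Hh)).
  rewrite -(conv_assoc HH) //; last exact: sc_compK.
  rewrite Ha //; last exact: conv_lin.
  by rewrite (Adi_one HH Hg) -(scR H).
- split.
    by move=> a b _ _ E; rewrite -(Rm_gSg HH Hg a) E (Rm_gSg HH Hg).
  move=> b /homspE Hb; exists (Rm H gS b); split; last by rewrite (Rm_ggS HH Hg).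
  apply/homspE => f h Hf Hh.
  rewrite (conv_Rm HH) //; last exact: sc_compK.
  have -> : conv H (fun z => h (r z)) gS = conv H gS (fun z => h (r (Ai z))).
    apply: funext => z; rewrite -(scR H) //; last exact: sc_compK.
    by rewrite -(scL H) //; [rewrite /Adi (Lm_ggS HH Hg) | exact: hrA].
  rewrite -(conv_assoc HH) //; last exact: hrA.
  rewrite Hb //; last exact: conv_lin.
  by rewrite (Adi_one HH Hg) -(scR H).
- by move=> k a b _ _; exact: (Rm_lin HH).
- split; first exact: (Rm_one HH (chr_g Hg)).
  by move=> a b _ _; exact: (Rm_mul HH _ _ (chr_g Hg)).
- move=> a Ha.
  have sU : subsp (homsp H r).
    split.
      apply/homspE => f h Hf Hh.
      rewrite (sc0 (conv_lin HH Hf (sc_compK Hh))) (sc0 Hf) mul0r //.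
    move=> c x y /homspE Hx /homspE Hy; apply/homspE => f h Hf Hh.
    rewrite (conv_lin HH Hf (sc_compK Hh)) Hx // Hy // Hf; ring.
  have [P [Plin PU Pid]] := proj_ex sU.
  have LmB f : scalar f -> homsp H r (Lm H f a).
    move=> Hf; apply/homspE => f' h Hf' Hh.
    rewrite (conv_Lm HH) //; last exact: sc_compK.
    rewrite (homspE _ _ _).1 //; last exact: conv_lin.
    by rewrite (scL H).
  exists [seq (p.1, P p.2) | p <- cop H a]; split.
  + apply: teq2I => f h Hf Hh; rewrite big_map /=.
    have HhP : scalar (fun z => h (P z)) by move=> k x y /=; rewrite Plin Hh.
    transitivity (conv H f (fun z => h (P z)) a); first by [].
    rewrite -(scL H a Hf HhP) /= Pid; [exact: (scL H a Hf Hh) | exact: LmB].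
  + by move=> p /mapP [q _ ->]; exact: PU.
  + apply: teq2I => f h Hf Hh; rewrite big_map /=.
    have HgL' : scalar g := HgL.
    have HhR : scalar (fun z => h (Rm H g z)) by move=> k x y /=; rewrite (Rm_lin HH HgL) Hh.
    have HhRP : scalar (fun z => h (Rm H g (P z))) by move=> k x y /=; rewrite Plin (Rm_lin HH HgL) Hh.
    transitivity (conv H f h (Rm H g a)); first by [].
    transitivity (conv H f (fun z => h (Rm H g (P z))) a); last by rewrite big_map.
    rewrite (conv_Rm HH) // -(scL H a Hf (conv_lin HH Hh HgL)) -(scR H _ HgL Hh).
    by rewrite -(scL H a Hf HhRP) /= Pid //; exact: LmB.
Qed.

End Main.

Unset Implicit Arguments.

Theorem proposition3 (R : realType) (A : algType R[i]) (H : hopf_ops A)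
    (K : lmodType R[i]) (O : cqs_ops A K) (r : A -> K) (g : A -> R[i]) :
  is_star_hopf H -> is_character H g -> is_rcqs H O r ->
  (* Ad_g is invertible, with inverse Ad_{g o S} *)
  let Adg := Ad H g in
  let Adginv := Ad H (fun x => g (ant H x)) in
  (forall x, Adg (Adginv x) = x /\ Adginv (Adg x) = x) /\
  let rg := fun x => r (Adginv x) in
  [/\ (* Ker r_g = Ad_g Ker r *)
      (forall x, rg x = 0 <-> exists y, r y = 0 /\ x = Adg y),
      (* Ker r_g is a tau-invariant right ideal and two-sided coideal *)
      is_tau_rideal_coideal H (fun x => rg x = 0),
      (* it determines a right coisotropic quantum subgroup K_g *)
      (exists (Kg : lmodType R[i]) (Og : cqs_ops A Kg) (r' : A -> Kg),
          is_rcqs H Og r' /\ forall x, r' x = 0 <-> rg x = 0),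
      (* B^{r_g} = Ad_g B^r *)
      (forall a, homsp H rg a <-> exists b, homsp H r b /\ a = Adg b) &
      (* B^{r_g} and B^r are isomorphic left comodule algebras *)
      lcomod_alg_iso H (homsp H r) (homsp H rg)].
Proof.
move=> HH Hg Hr; cbv zeta beta.
have EA : Ad H g = Adg H g by apply: funext => x; exact: AdgE.
have EI : Ad H (fun x => g (ant H x)) = Adi H g by apply: funext => x; exact: AdiE.
rewrite EA EI.
split.
  by move=> x; split; [exact: Adg_Adi | exact: Adi_Adg].
split.
- move=> x; split.
    by move=> Hx; exists (Adi H g x); split => //; rewrite (Adg_Adi HH Hg).
  by move=> [y [ry ->]]; rewrite (Adi_Adg HH Hg).
- exact: (part_ideal HH Hg Hr).
- exact: (part_Kg HH Hg Hr).
- exact: (part_homsp HH Hg Hr).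
- exact: (part_iso HH Hg Hr).
Qed.
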